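(* Let $M_G$ be a connected mixed graph whose underlying graph contains a triangle. Then $\rho(M_G)<2$ if and only if $M_G$ is itself a semi-positive triangle or a semi-negative triangle.
   Context: A mixed graph $M_G$ is obtained from a finite simple graph $G$ by orienting the edges of some subset of $E(G)$; it is connected if $G$ is. With $\omega=\frac{1+\mathbf{i}\sqrt3}{2}$, $N(M_G)=(n_{st})$ has entry $\omega$ for an arc from $u_s$ to $u_t$, $\bar\omega$ for an arc from $u_t$ to $u_s$, $1$ for an undirected edge, $0$ otherwise; $\rho(M_G)$ is the maximum absolute value of an eigenvalue of $N(M_G)$. A mixed triangle is a mixed graph with underlying graph $K_3$ on $v_1v_2v_3$, with weight $n_{12}n_{23}n_{31}$; it is semi-positive if the weight is $\omega$ or $\bar\omega$ and semi-negative if it is $-\omega$ or $-\bar\omega$. *)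

(* Defs.v *)
From HB Require Import structures.
From mathcomp Require Import all_boot all_order all_algebra all_field.
Set Implicit Arguments. Unset Strict Implicit. Unset Printing Implicit Defensive.
Import Order.TTheory GRing.Theory Num.Theory.
Local Open Scope ring_scope.

(** A mixed graph on the vertex set 'I_n: an underlying finite simple graph
    [mg_adj] (symmetric, irreflexive) together with a set of arcs [mg_arc];
    [mg_arc u v] means the edge {u,v} is oriented from u to v. *)
Record mixed_graph (n : nat) := MixedGraph {
  mg_adj : rel 'I_n;
  mg_arc : rel 'I_n;
  mg_adj_sym : symmetric mg_adj;
  mg_adj_irr : irreflexive mg_adj;
  mg_arc_adj : forall u v, mg_arc u v -> mg_adj u v;
  mg_arc_asym : forall u v, mg_arc u v -> ~~ mg_arc v u
}.

Definition omega : algC := (1 + 'i * sqrtC 3) / 2.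

Definition Nmx n (M : mixed_graph n) : 'M[algC]_n :=
  \matrix_(s, t)
    (if mg_arc M s t then omega
     else if mg_arc M t s then omega^*
     else if mg_adj M s t then 1 else 0).

Definition eigenvalues n (A : 'M[algC]_n) : seq algC :=
  sval (closed_field_poly_normal (char_poly A)).

Definition spectral_radius n (A : 'M[algC]_n) : algC :=
  \big[Num.max/0]_(z <- eigenvalues A) `|z|.

Definition rho n (M : mixed_graph n) : algC := spectral_radius (Nmx M).

Definition connected_mg n (M : mixed_graph n) : Prop :=
  forall u v : 'I_n, connect (mg_adj M) u v.

Definition has_triangle n (M : mixed_graph n) : Prop :=
  exists u v w : 'I_n,
    [&& mg_adj M u v, mg_adj M v w & mg_adj M w u].

Definition is_mixed_triangle n (M : mixed_graph n) : Prop :=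
  n = 3%N /\ forall u v : 'I_n, u != v -> mg_adj M u v.

Definition tri_weight n (M : mixed_graph n) (u v w : 'I_n) : algC :=
  Nmx M u v * Nmx M v w * Nmx M w u.

Definition semi_positive_triangle n (M : mixed_graph n) : Prop :=
  is_mixed_triangle M /\
  exists u v w : 'I_n, [&& u != v, v != w & w != u] /\
    (tri_weight M u v w = omega \/ tri_weight M u v w = omega^*).

Definition semi_negative_triangle n (M : mixed_graph n) : Prop :=
  is_mixed_triangle M /\
  exists u v w : 'I_n, [&& u != v, v != w & w != u] /\
    (tri_weight M u v w = - omega \/ tri_weight M u v w = - omega^*).

(* Main.v *)
Require Import Defs.
From HB Require Import structures.
From mathcomp Require Import all_boot all_order all_algebra all_field.
From mathcomp Require Import ring.
Import Order.TTheory GRing.Theory Num.Theory.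
Local Open Scope ring_scope.
Set Implicit Arguments. Unset Strict Implicit. Unset Printing Implicit Defensive.

Lemma omega2 : omega ^+ 2 = omega - 1.
Proof.
rewrite /omega.
have hi : 'i ^+ 2 = - 1 :> algC by rewrite sqrCi.
have hs : sqrtC 3 ^+ 2 = 3 :> algC by rewrite sqrtCK.
transitivity ((1 + 2 * 'i * sqrtC 3 + 'i ^+ 2 * sqrtC 3 ^+ 2) / 4 : algC).
  by field; rewrite ?pnatr_eq0.
rewrite hi hs; field.
by rewrite ?pnatr_eq0.
Qed.

Lemma omegaC : omega^* = 1 - omega.
Proof.
have -> : omega = 2^-1 + 'i * (sqrtC 3 / 2).
  rewrite /omega; field; by rewrite ?pnatr_eq0.
have r3 : (sqrtC 3 / 2 : algC) \is Num.real.
  by rewrite realE divr_ge0 ?ler0n ?sqrtC_ge0.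
have r2 : (2^-1 : algC) \is Num.real by rewrite realE invr_ge0 ler0n.
rewrite conjC_rect //; field; by rewrite ?pnatr_eq0.
Qed.

Definition zw := (int * int)%type.
Definition E (p : zw) : algC := p.1%:~R + p.2%:~R * omega.
Definition zadd (p q : zw) : zw := (p.1 + q.1, p.2 + q.2).
Definition zmul (p q : zw) : zw :=
  (p.1 * q.1 - p.2 * q.2, p.1 * q.2 + p.2 * q.1 + p.2 * q.2).
Definition zconj (p : zw) : zw := (p.1 + p.2, - p.2).
Definition znorm (p : zw) : int := p.1 * p.1 + p.1 * p.2 + p.2 * p.2.

Lemma E_add p q : E p + E q = E (zadd p q).
Proof. rewrite /E /zadd /= !rmorphD /=; ring. Qed.

Lemma E_mul p q : E p * E q = E (zmul p q).
Proof.
rewrite /E /zmul /= !(rmorphD, rmorphB, rmorphM) /=.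
transitivity (p.1%:~R * q.1%:~R + (p.1%:~R * q.2%:~R + p.2%:~R * q.1%:~R) * omega
   + p.2%:~R * q.2%:~R * omega ^+ 2 : algC); first ring.
rewrite omega2; ring.
Qed.

Lemma E_conj p : (E p)^* = E (zconj p).
Proof.
rewrite /E /zconj /= rmorphD rmorphM /= !rmorph_int /= omegaC !(rmorphD, rmorphN) /=; ring.
Qed.

Lemma E_norm2 p : `|E p| ^+ 2 = (znorm p)%:~R.
Proof.
rewrite normCK E_conj E_mul /E /zmul /zconj /znorm /=.
have -> : p.1 * - p.2 + p.2 * (p.1 + p.2) + p.2 * - p.2 = 0 by ring.
rewrite mul0r addr0; congr (_%:~R); ring.
Qed.

Lemma E_int (k : int) : E (k, 0) = k%:~R.
Proof. by rewrite /E /= mul0r addr0. Qed.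
Definition nrm2 {n} (y : 'rV[algC]_n) : algC := \sum_i `|y 0 i| ^+ 2.

Lemma bigmax_spec (s : seq algC) :
  0 <= \big[Num.max/0]_(x <- s) `|x| /\
  forall z, z \in s -> `|z| <= \big[Num.max/0]_(x <- s) `|x|.
Proof.
elim: s => [|a s [IH1 IH2]]; first by rewrite big_nil; split => // z.
rewrite big_cons.
have cmp : `|a| >=< \big[Num.max/0]_(x <- s) `|x|.
  by apply: real_comparable; apply: ger0_real.
split.
  by rewrite comparable_le_max // IH1 orbT.
move=> z; rewrite inE => /orP[/eqP ->|zs].
  by rewrite comparable_le_max // lexx.
by rewrite comparable_le_max // IH2 ?orbT.
Qed.

Lemma spectral_radius_ge0 n (A : 'M[algC]_n) : 0 <= spectral_radius A.
Proof. by case: (bigmax_spec (eigenvalues A)). Qed.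

Lemma eigen_in n (A : 'M[algC]_n) z : eigenvalue A z -> z \in eigenvalues A.
Proof.
rewrite eigenvalue_root_char /eigenvalues.
case: closed_field_poly_normal => s /= ->.
have /monicP -> := char_poly_monic A.
by rewrite scale1r root_prod_XsubC.
Qed.

Lemma spectral_radius_ge n (A : 'M[algC]_n) z :
  eigenvalue A z -> `|z| <= spectral_radius A.
Proof.
move=> /eigen_in zs; case: (bigmax_spec (eigenvalues A)) => _ H.
exact: H.
Qed.

Local Notation "M ^H" := (map_mx Num.Def.conjC (M ^T)) (at level 30).

Lemma nrm2E n (y : 'rV[algC]_n) : nrm2 y = (y *m y ^H) 0 0.
Proof.
rewrite /nrm2 mxE; apply: eq_bigr => i _.
by rewrite !mxE normCK.
Qed.

Lemma rayleigh n (A : 'M[algC]_n) (x : 'rV_n) : A ^H = A ->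
  nrm2 (x *m A) <= spectral_radius A ^+ 2 * nrm2 x.
Proof.
move=> hA.
have nA : A \is normalmx by apply/normalmxP; rewrite hA.
have eA := orthomx_spectralP nA.
set P := spectralmx A in eA; set d := spectral_diag A in eA.
have PU : P \is unitarymx := spectral_unitarymx A.
have Pu : P \in unitmx := spectral_unit A.
have iP : invmx P = P ^H := invmx_unitary PU.
have PP : P *m P ^H = 1%:M by apply/unitarymxP.
have PP' : P ^H *m P = 1%:M by rewrite -iP mulVmx.
set r := spectral_radius A.
have hd : forall i, `|d 0 i| <= r.
  move=> i; apply: spectral_radius_ge; apply/eigenvalueP.
  exists (delta_mx 0 i *m P).
    rewrite {1}eA !mulmxA mulmxK //.
    rewrite mul_mx_diag scalemxAl; congr (_ *m _).
    apply/matrixP => a b; rewrite !mxE (ord1 a) eqxx /=.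
    by case: eqP => [->|]; rewrite ?mulr1 ?mul1r ?mul0r ?mulr0.
  apply/eqP => h0.
  have := congr1 (mulmx^~ (invmx P)) h0; rewrite /= mulmxK // mul0mx => /matrixP /(_ 0 i); rewrite !mxE !eqxx /=.
  by move/eqP; rewrite oner_eq0.
have unorm : forall m (w : 'rV_m) (Q : 'M_m), Q *m Q ^H = 1%:M -> nrm2 (w *m Q) = nrm2 w.
  move=> m w Q hQ; rewrite !nrm2E trmx_mul map_mxM mulmxA -(mulmxA w) hQ mulmx1.
  by [].
set y := x *m P ^H.
have -> : x *m A = y *m diag_mx d *m P by rewrite {1}eA iP /y !mulmxA.
rewrite unorm //.
have -> : nrm2 x = nrm2 y.
  rewrite /y unorm //; by rewrite trmxCK.
rewrite /nrm2 mulr_sumr; apply: ler_sum => i _.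
rewrite mul_mx_diag mxE normrM exprMn mulrC; apply: ler_wpM2r; first exact: exprn_ge0.
rewrite expr2 expr2; apply: ler_pM; rewrite ?normr_ge0 //; exact: hd.
Qed.

Inductive lab := L0 | L1 | Lw | Lb.
Definition labZ (l : lab) : zw :=
  match l with L0 => (0, 0) | L1 => (1, 0) | Lw => (0, 1) | Lb => (1, -1) end.
Definition labC (l : lab) : lab :=
  match l with L0 => L0 | L1 => L1 | Lw => Lb | Lb => Lw end.
Definition nzl (l : lab) : bool := if l is L0 then false else true.

Definition labM n (M : mixed_graph n) (s t : 'I_n) : lab :=
  if mg_arc M s t then Lw else if mg_arc M t s then Lb
  else if mg_adj M s t then L1 else L0.

Lemma Nmx_lab n (M : mixed_graph n) s t : Nmx M s t = E (labZ (labM M s t)).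
Proof.
rewrite /Nmx mxE /labM.
case: (mg_arc M s t); first by rewrite /E /= mul1r add0r.
have hN : (-1)%:~R = -1 :> algC by rewrite rmorphN1.
case: (mg_arc M t s); first by rewrite omegaC /E /= hN mulN1r.
by case: (mg_adj M s t); rewrite /E /= ?mul0r ?addr0.
Qed.

Lemma labM_sym n (M : mixed_graph n) s t : labM M t s = labC (labM M s t).
Proof.
rewrite /labM (mg_adj_sym M t s).
case Hst: (mg_arc M s t).
  by move: (mg_arc_asym Hst); case: (mg_arc M t s).
by case: (mg_arc M t s) => //; case: (mg_adj M s t).
Qed.

Lemma labM_diag n (M : mixed_graph n) s : labM M s s = L0.
Proof.
rewrite /labM.
case Hs: (mg_arc M s s); first by move: (mg_arc_adj Hs); rewrite (mg_adj_irr M).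
by rewrite (mg_adj_irr M).
Qed.

Lemma labM_nz n (M : mixed_graph n) s t : nzl (labM M s t) = mg_adj M s t.
Proof.
rewrite /labM.
case Hst: (mg_arc M s t); first by rewrite (mg_arc_adj Hst).
case Hts: (mg_arc M t s); first by rewrite mg_adj_sym (mg_arc_adj Hts).
by case: (mg_adj M s t).
Qed.

Lemma labZC l : labZ (labC l) = zconj (labZ l).
Proof. by case: l. Qed.

Lemma Nmx_herm n (M : mixed_graph n) : map_mx Num.Def.conjC (Nmx M)^T = Nmx M.
Proof.
apply/matrixP => s t; rewrite mxE mxE.
have := Nmx_lab M t s; rewrite /Nmx => ->.
have := Nmx_lab M s t; rewrite /Nmx => ->.
by rewrite E_conj -labZC -labM_sym.
Qed.

Definition isum m (F : nat -> int) : int := foldr (fun i a => F i + a) 0 (iota 0 m).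
Definition zsum m (F : nat -> zw) : zw := foldr (fun i a => zadd (F i) a) (0, 0) (iota 0 m).
Definition good m (B : nat -> nat -> zw) (y : nat -> zw) : bool :=
  (0 < isum m (fun i => znorm (y i))) &&
  (4 * isum m (fun i => znorm (y i)) <=
     isum m (fun j => znorm (zsum m (fun i => zmul (y i) (B i j))))).

Lemma isumE m F : isum m F = \sum_(i < m) F i.
Proof.
rewrite -(big_mkord xpredT) /index_iota subn0 /isum.
by elim: (iota 0 m) => [|a s IH] /=; rewrite ?big_nil ?big_cons ?IH.
Qed.

Lemma E_zsum m F : E (zsum m F) = \sum_(i < m) E (F i).
Proof.
rewrite -(big_mkord xpredT (fun i => E (F i))) /index_iota subn0 /zsum.
elim: (iota 0 m) => [|a s IH] /=; rewrite ?big_nil ?big_cons -?IH ?E_add //.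
by rewrite /E /= mul0r addr0.
Qed.

Lemma sum_delta n (k : 'I_n) (G : 'I_n -> algC) :
  \sum_j (k == j)%:R * G j = G k.
Proof.
rewrite (bigD1 k) //= eqxx mul1r big1 ?addr0 // => j /negbTE.
by rewrite eq_sym => ->; rewrite mul0r.
Qed.

Lemma le2_sqr (r : algC) : 0 <= r -> 4 <= r ^+ 2 -> 2 <= r.
Proof.
move=> r0 h.
have rr : r \is Num.real by apply: ger0_real.
have r2 : (2 : algC) \is Num.real by apply: ger0_real; rewrite ler0n.
rewrite real_leNgt //; apply/negP => lt.
have : r ^+ 2 < 2 ^+ 2.
  rewrite !expr2; apply: ltr_pM => //.
move: h; rewrite (_ : (2 : algC) ^+ 2 = 4); last by rewrite expr2 -natrM.
by move=> h1 h2; move: (le_lt_trans h1 h2); rewrite ltxx.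
Qed.

Lemma eq_ler (a b : algC) : a = b -> a <= b.
Proof. by move->. Qed.

Lemma witness_rho n (M : mixed_graph n) m (f : nat -> 'I_n)
    (B : nat -> nat -> zw) (y : nat -> zw) :
  (forall i j, (i < m)%N -> (j < m)%N -> f i = f j -> i = j) ->
  (forall i j, (i < m)%N -> (j < m)%N -> Nmx M (f i) (f j) = E (B i j)) ->
  good m B y -> 2 <= rho M.
Proof.
move=> finj hB /andP[hpos hle].
set A := Nmx M.
pose fo (i : 'I_m) := f i.
have foinj : injective fo.
  by move=> i j /(finj _ _ (ltn_ord i) (ltn_ord j)) /val_inj.
pose x : 'rV[algC]_n := \row_k \sum_(i < m) (fo i == k)%:R * E (y i).
have hx : forall i, x 0 (fo i) = E (y i).
  move=> i; rewrite mxE (bigD1 i) //= eqxx mul1r big1 ?addr0 // => j /negbTE ji.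
  by rewrite (inj_eq foinj) ji mul0r.
have nx : nrm2 x = (isum m (fun i => znorm (y i)))%:~R.
  rewrite isumE rmorph_sum /nrm2.
  transitivity (\sum_k \sum_(i < m) (fo i == k)%:R * (E (y i) * (x 0 k)^*)).
    apply: eq_bigr => k _; rewrite normCK {1}mxE mulr_suml.
    by apply: eq_bigr => i _; rewrite mulrA.
  rewrite exchange_big /=; apply: eq_bigr => i _.
  by rewrite sum_delta hx -normCK E_norm2.
have hw : forall j : 'I_m, (x *m A) 0 (fo j) =
    E (zsum m (fun i => zmul (y i) (B i j))).
  move=> j; rewrite E_zsum mxE.
  transitivity (\sum_k \sum_(i < m) (fo i == k)%:R * (E (y i) * A k (fo j))).
    apply: eq_bigr => k _; rewrite mxE mulr_suml.
    by apply: eq_bigr => i _; rewrite mulrA.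
  rewrite exchange_big /=; apply: eq_bigr => i _.
  by rewrite (sum_delta (fo i) (fun k => E (y i) * A k (fo j))) hB // E_mul.
have nw : (isum m (fun j => znorm (zsum m (fun i => zmul (y i) (B i j)))))%:~R
          <= nrm2 (x *m A).
  rewrite isumE rmorph_sum.
  apply: (@le_trans _ _ (\sum_(j < m) `|(x *m A) 0 (fo j)| ^+ 2)).
    by apply: eq_ler; apply: eq_bigr => j _; rewrite hw E_norm2.
  rewrite /nrm2.
  apply: (@le_trans _ _ (\sum_k (\sum_(j < m) (fo j == k)%:R) * `|(x *m A) 0 k| ^+ 2)).
    apply: eq_ler; rewrite (eq_bigr (fun j => \sum_k (fo j == k)%:R * `|(x *m A) 0 k| ^+ 2)).
      by rewrite exchange_big; apply: eq_bigr => k _; rewrite mulr_suml.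
    by move=> j _; rewrite sum_delta.
  apply: ler_sum => k _.
  rewrite -[X in _ <= X]mul1r; apply: ler_wpM2r; first exact: exprn_ge0.
  case: (pickP (fun j => fo j == k)) => [j0 /eqP hj0|none].
    rewrite (bigD1 j0) /= ?hj0 ?eqxx // big1 ?addr0 // => j jj0.
    by rewrite -hj0 (inj_eq foinj) (negbTE jj0).
  by rewrite big1 ?ler01 // => j _; rewrite none.
have ray := rayleigh x (Nmx_herm M).
rewrite -/A in ray.
set S := isum m (fun i => znorm (y i)) in hpos hle nx.
set T := isum m _ in hle nw.
have S0 : (0 : algC) < S%:~R by rewrite ltr0z.
have h4 : 4 * S%:~R <= spectral_radius A ^+ 2 * S%:~R.
  apply: le_trans (le_trans nw _); last by rewrite -nx.
  by rewrite -[4 : algC]/((4 : int)%:~R) -rmorphM ler_int.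
apply: le2_sqr; first exact: spectral_radius_ge0.
by rewrite -(ler_pM2r S0).
Qed.

Definition mkB4 (l01 l12 l02 l03 l13 l23 : lab) (i j : nat) : zw :=
  labZ (match i, j with
  | 0, 1 => l01 | 1, 0 => labC l01
  | 1, 2 => l12 | 2, 1 => labC l12
  | 0, 2 => l02 | 2, 0 => labC l02
  | 0, 3 => l03 | 3, 0 => labC l03
  | 1, 3 => l13 | 3, 1 => labC l13
  | 2, 3 => l23 | 3, 2 => labC l23
  | _, _ => L0 end)%N.

Definition tri (B : nat -> nat -> zw) (u v w : nat) (k : nat) : zw :=
  if k == w then (1, 0) else if k == u then zconj (zmul (B u v) (B v w))
  else if k == v then zconj (zmul (B v u) (B u w)) else (0, 0).

Definition cands (B : nat -> nat -> zw) : seq (nat -> zw) :=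
  [seq (fun k => zadd (B i k) (if k == i then (a, 0) else (0, 0)))
     | i <- iota 0 4, a <- [:: -2; -1; 0; 1; 2]] ++
  [seq tri B p.1.1 p.1.2 p.2 | p <- [:: (0,1,2); (0,2,1); (1,0,2); (1,2,0); (2,0,1); (2,1,0)]%N].

Definition check4 a b c d e f := has (good 4 (mkB4 a b c d e f)) (cands (mkB4 a b c d e f)).

Definition allb (P : lab -> bool) := [&& P L1, P Lw & P Lb].
Definition allb0 (P : lab -> bool) := P L0 && allb P.

Lemma allbP P : allb P -> forall l, nzl l -> P l.
Proof. by case/and3P => ? ? ? []. Qed.
Lemma allb0P P : allb0 P -> forall l, P l.
Proof. by case/andP => ? /and3P [? ? ?] []. Qed.

Lemma all_check4 : allb (fun a => allb (fun b => allb (fun c => allb (fun d =>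
  allb0 (fun e => allb0 (fun f => check4 a b c d e f)))))).
Proof. vm_compute. reflexivity. Qed.

Lemma has_ex T (p : pred T) s : has p s -> exists x, p x.
Proof. by elim: s => //= a s IH /orP[h|/IH//]; exists a. Qed.

Lemma four_ok n (M : mixed_graph n) (u v w d : 'I_n) :
  mg_adj M u v -> mg_adj M v w -> mg_adj M u w -> mg_adj M u d ->
  d != v -> d != w -> 2 <= rho M.
Proof.
move=> huv hvw huw hud dv dw.
have neq : forall s t, mg_adj M s t -> s != t.
  by move=> s t h; apply/eqP => e; move: h; rewrite e (mg_adj_irr M).
have uv := neq _ _ huv; have vw := neq _ _ hvw; have uw := neq _ _ huw; have ud := neq _ _ hud.
pose a := labM M u v; pose b := labM M v w; pose c := labM M u w.
pose d0 := labM M u d; pose e := labM M v d; pose g := labM M w d.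
have hc : check4 a b c d0 e g.
  have H := all_check4.
  have nz : forall s t, mg_adj M s t -> nzl (labM M s t) by move=> s t; rewrite labM_nz.
  move: (allbP H (nz _ _ huv)) => /allbP /(_ _ (nz _ _ hvw)) /allbP /(_ _ (nz _ _ huw)).
  move=> /allbP /(_ _ (nz _ _ hud)) /allb0P /(_ e) /allb0P /(_ g).
  by [].
have [y hy] := has_ex hc.
pose f (i : nat) := nth u [:: u; v; w; d] i.
apply: (@witness_rho n M 4 f (mkB4 a b c d0 e g) y) => //.
  move=> i j hi hj.
  case: i hi => [|[|[|[|i]]]] // _; case: j hj => [|[|[|[|j]]]] // _;
  rewrite /f /=; move/eqP; rewrite ?eqxx //;
  by rewrite ?(negbTE uv) ?(negbTE vw) ?(negbTE uw) ?(negbTE ud) ?(negbTE dv) ?(negbTE dw)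
     1?eq_sym ?(negbTE uv) ?(negbTE vw) ?(negbTE uw) ?(negbTE ud) ?(negbTE dv) ?(negbTE dw).
move=> i j hi hj; rewrite Nmx_lab.
case: i hi => [|[|[|[|i]]]] // _; case: j hj => [|[|[|[|j]]]] // _;
  by rewrite /f /mkB4 /= ?labM_diag // -?labM_sym.
Qed.

Lemma big_n_ok n (M : mixed_graph n) :
  connected_mg M -> has_triangle M -> (3 < n)%N -> 2 <= rho M.
Proof.
move=> hc [u [v [w /and3P [huv hvw hwu]]]] n4.
have neq : forall s t, mg_adj M s t -> s != t.
  by move=> s t h; apply/eqP => e; move: h; rewrite e (mg_adj_irr M).
have sym : forall s t, mg_adj M s t -> mg_adj M t s by move=> s t; rewrite mg_adj_sym.
pose s := [:: u; v; w].
have [k hk] : exists k : 'I_n, k \notin s.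
  case: (boolP [exists k, k \notin s]) => [/existsP//|/existsPn hall].
  have : (#|'I_n| <= #|s|)%N.
    by apply: subset_leq_card; apply/subsetP => k _; move: (hall k); rewrite negbK.
  rewrite card_ord => /leq_trans /(_ (card_size s)) /= => h.
  by move: (leq_ltn_trans h n4); rewrite ltnn.
have [t [d [ht hd htd]]] : exists t d, [/\ t \in s, d \notin s & mg_adj M t d].
  case: (boolP [exists t, exists d, [&& t \in s, d \notin s & mg_adj M t d]]).
    by move=> /existsP [t /existsP [d /and3P [? ? ?]]]; exists t, d.
  move=> /existsPn hno.
  have cl : closed (mg_adj M) s.
    move=> x y hxy; case xs: (x \in s); case ys: (y \in s) => //.
      by move: (hno x) => /existsPn /(_ y); rewrite xs ys hxy.
    by move: (hno y) => /existsPn /(_ x); rewrite xs ys (sym _ _ hxy).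
  move: (closed_connect cl (hc u k)); rewrite (negbTE hk) inE eqxx //.
have nin : forall z, z \in s -> d != z by move=> z zs; apply/eqP => e; move: hd; rewrite e zs.
have dv : d != v by apply: nin; rewrite !inE eqxx ?orbT.
have dw : d != w by apply: nin; rewrite !inE eqxx ?orbT.
have du : d != u by apply: nin; rewrite !inE eqxx ?orbT.
move: ht; rewrite !inE => /or3P [/eqP et|/eqP et|/eqP et]; subst t.
- by apply: (@four_ok n M u v w d) => //; apply: sym.
- by apply: (@four_ok n M v w u d) => //; apply: sym.
- by apply: (@four_ok n M w u v d) => //; apply: sym.
Qed.

Definition semiset : seq zw := [:: (0, 1); (1, -1); (0, -1); (-1, 1)].
Definition tauz (B : nat -> nat -> zw) (u v w : nat) := zmul (zmul (B u v) (B v w)) (B w u).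
Definition check3 a b c : bool :=
  let B := mkB4 a b c L0 L0 L0 in
  let t := tauz B 0 1 2 in
  let cz := zadd t (tauz B 0 2 1) in
  [&& (if (t == (1, 0)) || (t == (-1, 0)) then good 3 B (tri B 0 1 2) else t \in semiset),
      all (fun i => all (fun l =>
         zsum 3 (fun k => zsum 3 (fun j => zmul (zmul (B i j) (B j k)) (B k l))) ==
         zadd (zmul (3, 0) (B i l)) (if i == l then cz else (0, 0))) (iota 0 3)) (iota 0 3) &
      all (fun p => (tauz B p.1.1 p.1.2 p.2 \in semiset) ==> (cz \in [:: (1, 0); (-1, 0)]))
        [:: (0,1,2); (0,2,1); (1,0,2); (1,2,0); (2,0,1); (2,1,0)]%N].

Lemma all_check3 : allb (fun a => allb (fun b => allb (fun c => check3 a b c))).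
Proof. vm_compute. reflexivity. Qed.

Lemma E_inj p q : E p = E q -> p = q.
Proof.
case: p q => [a b] [a' b']; rewrite /E /= => h.
have h1 : (a - a')%:~R + (b - b')%:~R * omega = 0 :> algC.
  transitivity ((a%:~R + b%:~R * omega) - (a'%:~R + b'%:~R * omega) : algC).
    by rewrite !rmorphB /=; ring.
  by rewrite h subrr.
have h2 := congr1 Num.conj h1; rewrite rmorphD rmorphM /= !rmorph_int /= omegaC rmorph0 in h2.
have hb : (b - b')%:~R * (2 * omega - 1) =
   ((a - a')%:~R + (b - b')%:~R * omega) - ((a - a')%:~R + (b - b')%:~R * (1 - omega)) :> algC.
  by ring.
rewrite h1 h2 subrr in hb.
have om : (2 * omega - 1 : algC) != 0.
  rewrite /omega (_ : 2 * ((1 + 'i * sqrtC 3) / 2) - 1 = 'i * sqrtC 3 :> algC); last first.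
    by field; rewrite ?pnatr_eq0.
  by rewrite mulf_neq0 ?neq0Ci // sqrtC_eq0 pnatr_eq0.
move: hb => /eqP; rewrite mulf_eq0 (negbTE om) orbF intr_eq0 subr_eq0 => /eqP eb.
subst b'; move: h1; rewrite subrr mul0r addr0 => /eqP; rewrite intr_eq0 subr_eq0 => /eqP ->.
by [].
Qed.

Lemma cubic_bound (z c : algC) : z ^+ 3 = 3 * z + c -> `|c| = 1 -> `|z| < 2.
Proof.
move=> hz hc.
have r0 : 0 <= `|z| := normr_ge0 z.
rewrite real_ltNge ?ger0_real ?ler0n //; apply/negP => h2.
have e1 : `|z| ^+ 3 <= 3 * `|z| + 1.
  rewrite -normrX hz; apply: le_trans (ler_normD _ _) _.
  by rewrite normrM normr_nat hc.
have e2 : 4 * `|z| <= `|z| ^+ 3.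
  rewrite exprS mulrC; apply: ler_wpM2l => //.
  rewrite expr2 (_ : (4 : algC) = 2 * 2); last by rewrite -natrM.
  by apply: ler_pM; rewrite ?ler0n.
have e3 := le_trans e2 e1.
rewrite (_ : (4 : algC) * `|z| = 3 * `|z| + `|z|) in e3; last first.
  by ring.
rewrite lerD2l in e3.
by move: (le_trans h2 e3); rewrite lern1.
Qed.

Lemma rho_lt2 n (A : 'M[algC]_n) :
  (forall z, eigenvalue A z -> `|z| < 2) -> spectral_radius A < 2.
Proof.
move=> H.
have : forall z, z \in eigenvalues A -> `|z| < 2.
  move=> z; rewrite /eigenvalues => zs; apply: H.
  move: zs; case: closed_field_poly_normal => s /= hs zs.
  rewrite eigenvalue_root_char hs.
  have /monicP -> := char_poly_monic A.
  by rewrite scale1r root_prod_XsubC.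
rewrite /spectral_radius; elim: (eigenvalues A) => [|a s IH] hs.
  by rewrite big_nil ltr0n.
rewrite big_cons comparable_gt_max; last first.
  apply: real_comparable; first exact: normr_real.
  by apply: ger0_real; case: (bigmax_spec s).
rewrite hs ?inE ?eqxx // IH // => z zs; apply: hs; rewrite inE zs orbT.
by [].
Qed.

Definition o0 : 'I_3 := @Ordinal 3 0 isT.
Definition o1 : 'I_3 := @Ordinal 3 1 isT.
Definition o2 : 'I_3 := @Ordinal 3 2 isT.

Lemma ord3P (P : 'I_3 -> Prop) : P o0 -> P o1 -> P o2 -> forall i, P i.
Proof.
move=> h0 h1 h2 [[|[|[|//]]] hi]; rewrite ?(bool_irrelevance hi isT) //.
Qed.

Lemma tri3_all (M : mixed_graph 3) : has_triangle M -> forall s t, s != t -> mg_adj M s t.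
Proof.
move=> [u [v [w /and3P []]]].
have irr := mg_adj_irr M.
have sy : forall s t, mg_adj M s t -> mg_adj M t s by move=> s t; rewrite mg_adj_sym.
move: u v w; apply: ord3P; apply: ord3P; apply: ord3P;
  rewrite ?irr // => h1 h2 h3; apply: ord3P; apply: ord3P; rewrite ?eqxx //= => _;
  first [ exact h1 | exact h2 | exact h3 | apply: sy; first [exact h1 | exact h2 | exact h3]].
Qed.

Section Three.
Variable M : mixed_graph 3.
Hypothesis hall : forall s t, s != t -> mg_adj M s t.

Let a := labM M o0 o1.
Let b := labM M o1 o2.
Let c := labM M o0 o2.
Let B := mkB4 a b c L0 L0 L0.

Lemma n3_check : check3 a b c.
Proof.
have nz : forall s t, s != t -> nzl (labM M s t) by move=> s t /hall; rewrite labM_nz.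
by move: (allbP all_check3 (nz o0 o1 isT)) => /allbP /(_ _ (nz o1 o2 isT)) /allbP /(_ _ (nz o0 o2 isT)).
Qed.

Lemma n3_B (i j : 'I_3) : Nmx M i j = E (B i j).
Proof.
rewrite Nmx_lab; move: i j; apply: ord3P; apply: ord3P;
  by rewrite /B /mkB4 /a /b /c /= ?labM_diag // -?labM_sym.
Qed.

Lemma n3_tri (u v w : 'I_3) : tri_weight M u v w = E (tauz B u v w).
Proof. by rewrite /tri_weight !n3_B /tauz !E_mul. Qed.

End Three.

Lemma E01 : E (0, 1) = omega. Proof. by rewrite /E /= mul1r add0r. Qed.
Lemma E1m1 : E (1, -1) = omega^*. Proof. by rewrite omegaC /E /= rmorphN1 mulN1r. Qed.
Lemma E0m1 : E (0, -1) = - omega. Proof. by rewrite /E /= rmorphN1 mulN1r add0r. Qed.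
Lemma Em11 : E (-1, 1) = - omega^*.
Proof. by rewrite omegaC /E /= rmorphN1 mul1r opprB addrC. Qed.

Lemma n3_hard (M : mixed_graph 3) : (forall s t, s != t -> mg_adj M s t) ->
  rho M < 2 -> semi_positive_triangle M \/ semi_negative_triangle M.
Proof.
move=> hall hlt.
have := n3_check hall; rewrite /check3 => /and3P [h1 _ _].
set B := mkB4 _ _ _ _ _ _ in h1.
have hB : forall i j : 'I_3, Nmx M i j = E (B i j) := @n3_B M.
have htri : is_mixed_triangle M by split.
move: h1; case: ifP => _ h1.
  pose f (i : nat) := nth o0 [:: o0; o1; o2] i.
  have := @witness_rho 3 M 3 f B (tri B 0 1 2) _ _ h1.
  have -> : 2 <= rho M = false.
    by apply/negP => h; move: (le_lt_trans h hlt); rewrite ltxx.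
  move=> H; suff: false by []; apply: H.
    by move=> [|[|[|i]]] [|[|[|j]]].
  by move=> [|[|[|i]]] [|[|[|j]]] // _ _; rewrite hB.
have ht := @n3_tri M o0 o1 o2; rewrite -/B in ht.
move: h1; rewrite !inE => /or4P [/eqP e|/eqP e|/eqP e|/eqP e]; rewrite e in ht.
- by left; split => //; exists o0, o1, o2; split => //; left; rewrite ht E01.
- by left; split => //; exists o0, o1, o2; split => //; right; rewrite ht E1m1.
- by right; split => //; exists o0, o1, o2; split => //; left; rewrite ht E0m1.
- by right; split => //; exists o0, o1, o2; split => //; right; rewrite ht Em11.
Qed.

Lemma perm3 (u v w : 'I_3) : [&& u != v, v != w & w != u] ->
  ((u : nat), (v : nat), (w : nat)) \in
    [:: (0,1,2); (0,2,1); (1,0,2); (1,2,0); (2,0,1); (2,1,0)]%N.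
Proof. by move: u v w; apply: ord3P; apply: ord3P; apply: ord3P. Qed.

Lemma n3_easy (M : mixed_graph 3) : (forall s t, s != t -> mg_adj M s t) ->
  semi_positive_triangle M \/ semi_negative_triangle M -> rho M < 2.
Proof.
move=> hall hsemi.
have := n3_check hall; rewrite /check3 => /and3P [_ h2 h3].
set B := mkB4 _ _ _ _ _ _ in h2 h3.
have hB : forall i j : 'I_3, Nmx M i j = E (B i j) := @n3_B M.
set cz := zadd _ _ in h2 h3.
have [u [v [w [huvw ht]]]] : exists u v w : 'I_3,
    [&& u != v, v != w & w != u] /\ tauz B u v w \in semiset.
  case: hsemi => [[_ [u [v [w [huvw ht]]]]]|[_ [u [v [w [huvw ht]]]]]];
  exists u, v, w; split => //; move: ht; rewrite (@n3_tri M) -/B;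
  rewrite -?Em11 -?E1m1 -?E0m1 -?E01 => -[] /E_inj ->; by rewrite !inE eqxx ?orbT.
have hc : `|E cz| = 1.
  move/allP: h3 => /(_ _ (perm3 huvw)) /= /implyP /(_ ht).
  by rewrite !inE => /orP [] /eqP ->; rewrite E_int ?normrN normr1.
have hA3 : Nmx M *m Nmx M *m Nmx M = 3 *: Nmx M + E cz *: 1%:M.
  apply/matrixP => i l.
  have := allP h2 i; rewrite mem_iota ltn_ord => /(_ isT) /allP /(_ l).
  rewrite mem_iota ltn_ord => /(_ isT) /eqP /(congr1 E).
  rewrite E_zsum -E_add -E_mul E_int => hE.
  transitivity (\sum_(k < 3) E (zsum 3 (fun j => zmul (zmul (B i j) (B j k)) (B k l)))).
    rewrite mxE; apply: eq_bigr => k _; rewrite E_zsum mxE mulr_suml.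
    by apply: eq_bigr => j _; rewrite !hB !E_mul.
  rewrite hE [RHS]mxE [X in _ = X + _]mxE hB [X in _ = _ + X]mxE mxE; congr (_ + _).
  rewrite (inj_eq val_inj); case: (i == l); rewrite ?mulr1 ?mulr0 //.
  by rewrite /E /= mul0r addr0.
apply: rho_lt2 => z /eigenvalueP [x hx x0].
apply: (cubic_bound _ hc).
have e1 : x *m (Nmx M *m Nmx M *m Nmx M) = z ^+ 3 *: x.
  rewrite !mulmxA hx -!scalemxAl hx -!scalemxAl hx !scalerA; congr (_ *: _); ring.
have e2 : x *m (3 *: Nmx M + E cz *: 1%:M) = (3 * z + E cz) *: x.
  by rewrite mulmxDr -!scalemxAr mulmx1 hx scalerA scalerDl.
move: e1; rewrite hA3 e2 => /eqP; rewrite -subr_eq0 -scalerBl scalemx_eq0 (negbTE x0) orbF.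
by rewrite subr_eq0 => /eqP.
Qed.

Theorem lemma6p14 (n : nat) (M : mixed_graph n) :
  connected_mg M -> has_triangle M ->
  (rho M < 2 <-> semi_positive_triangle M \/ semi_negative_triangle M).
Proof.
move=> hc ht.
have n3 : (3 <= n)%N.
  case: (ht) => u [v [w /and3P [huv hvw hwu]]].
  have neq : forall s t, mg_adj M s t -> s != t.
    by move=> s t h; apply/eqP => e; move: h; rewrite e (mg_adj_irr M).
  have us : uniq [:: u; v; w].
    rewrite /= !inE negb_or (neq _ _ huv) (neq _ _ hvw) /= andbT.
    by rewrite eq_sym (neq _ _ hwu).
  rewrite -(card_ord n) -[3%N]/(size [:: u; v; w]) -(card_uniqP us).
  exact: max_card.
case: (n =P 3) => [e|ne].
  subst n; have hall := tri3_all ht.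
  by split; [exact: n3_hard hall | exact: n3_easy hall].
have n4 : (3 < n)%N by rewrite ltn_neqAle eq_sym n3 andbT; apply/eqP.
have r2 := big_n_ok hc ht n4.
split.
  by move=> hlt; move: (le_lt_trans r2 hlt); rewrite ltxx.
by case => [[[e _] _]|[[e _] _]].
Qed.
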